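(* Let $D$ be a small category, $\mathcal F$ a collection of $D$-orbits, and $X$ a $D$-space admitting a (non-relative) $D$-CW structure of type $\mathcal F$. Then $X$ is a $D$-space of type $\mathcal F$.
   Context: A $D$-space is a functor $D\to\mathrm{Top}$; a $D$-orbit is a $D$-space whose colimit is a point. Topological spaces are regarded as constant $D$-spaces. A relative $D$-CW structure of type $\mathcal F$ on $X$ is a sequence $X^{-1}\hookrightarrow X^0\hookrightarrow X^1\hookrightarrow\cdots\hookrightarrow X$ with $X=\operatorname{colim}_i X^i$, such that for each $i\ge 0$, $X^i$ is the pushout of $X^{i-1}\leftarrow S^{i-1}\times A_i\hookrightarrow D^i\times A_i$, where each $A_i$ is a disjoint union of $D$-orbits in $\mathcal F$ (and $S^{-1}=\emptyset$). It is a (non-relative) $D$-CW structure if $X^{-1}$ is the constant empty $D$-space. For $x$ a point of $\operatorname{colim}_D X$, the orbit $O_x$ is the pullback of $X\to\operatorname{colim}_D X$ (constant $D$-space) along $\{x\}\hookrightarrow \operatorname{colim}_D X$. $X$ is of type $\mathcal F$ if $O_x\in\mathcal F$ for every $x\in\operatorname{colim}_D X$ (orbits being considered up to isomorphism). *)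

(* Defs.v *)
From HB Require Import structures.
From mathcomp Require Import all_boot all_order all_algebra.
From mathcomp Require Import all_classical all_reals all_analysis.
From mathcomp Require Import Rstruct Rstruct_topology.
From Stdlib Require Import Rdefinitions.

Set Implicit Arguments.
Unset Strict Implicit.
Unset Printing Implicit Defensive.

Import Order.TTheory GRing.Theory Num.Theory.
Local Open Scope classical_set_scope.
Local Open Scope ring_scope.

Record Cat := {
  Obj : Type;
  Hom : Obj -> Obj -> Type;
  idm : forall a, Hom a a;
  comp : forall a b c, Hom b c -> Hom a b -> Hom a c;
  comp_idl : forall a b (f : Hom a b), comp (idm b) f = f;
  comp_idr : forall a b (f : Hom a b), comp f (idm a) = f;
  comp_assoc : forall a b c e (h : Hom c e) (g : Hom b c) (f : Hom a b),
      comp h (comp g f) = comp (comp h g) f }.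

Record DSpace (D : Cat) := {
  sp :> Obj D -> topologicalType;
  act : forall a b, Hom a b -> sp a -> sp b;
  act_cont : forall a b (f : Hom a b), continuous (act f);
  act_id : forall a (x : sp a), act (idm a) x = x;
  act_comp : forall a b c (g : Hom b c) (f : Hom a b) (x : sp a),
      act (comp g f) x = act g (act f x) }.
Arguments act {D} _ {a b} f x.

Unset Implicit Arguments.
Record DMap (D : Cat) (X Y : DSpace D) := {
  dmap :> forall d, X d -> Y d;
  dmap_cont : forall d : Obj D, continuous (dmap d);
  dmap_nat : forall a b (f : Hom a b) (x : X a),
      dmap b (act X f x) = act Y f (dmap a x) }.

Arguments DMap {D} X Y.
Arguments dmap {D X Y} _ d _.
Arguments dmap_cont {D X Y} _ d.
Arguments dmap_nat {D X Y} _ {a b} f x.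
Set Implicit Arguments.

Definition DIso (D : Cat) (X Y : DSpace D) : Prop :=
  exists (f : DMap X Y) (g : DMap Y X),
    (forall d x, g d (f d x) = x) /\ (forall d y, f d (g d y) = y).

Definition EmptyD (D : Cat) (X : DSpace D) : Prop := forall d, X d -> False.

Lemma prodC_cont (T U V : topologicalType) (f : U -> V) :
  continuous f -> continuous (fun p : T * U => (p.1, f p.2)).
Proof.
move=> fc [a b] W /= [[P Q]] /= [Pa Qfb] PQW.
exists (P, f @^-1` Q); first by split => //; exact: fc.
by case=> x y /= [Px Qy]; apply: PQW.
Qed.

Definition ProdC (D : Cat) (T : topologicalType) (A : DSpace D) : DSpace D.
Proof.
refine (@Build_DSpace D (fun d => (T * A d)%type)
  (fun a b f p => (p.1, act A f p.2)) _ _ _).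
- by move=> a b f; apply: prodC_cont; exact: act_cont.
- by move=> a [t x] /=; rewrite act_id.
- by move=> a b c g f [t x] /=; rewrite act_comp.
Defined.

Definition sqnorm (n : nat) (v : 'rV[R]_n) : R := \sum_(i < n) v ord0 i ^+ 2.
Definition Disk (n : nat) : topologicalType :=
  set_type [set v : 'rV[R]_n | sqnorm v <= 1].
Definition Sphere (n : nat) : topologicalType :=
  set_type [set v : 'rV[R]_n | sqnorm v = 1].   (* this is S^(n-1) *)

Definition sphere_in_disk (n : nat) (s : Sphere n) : Disk n.
Proof.
exists (val s); apply/mem_set => /=.
by move: (set_valP s) => /= ->.
Defined.

Definition IsPushout (D : Cat) (P Q X0 X1 : DSpace D)
  (u : forall d, P d -> X0 d) (v : forall d, P d -> Q d)
  (j : forall d, X0 d -> X1 d) (w : forall d, Q d -> X1 d) : Prop :=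
  (forall d p, j d (u d p) = w d (v d p)) /\
  forall (Y : DSpace D) (a : DMap X0 Y) (b : DMap Q Y),
    (forall d p, a d (u d p) = b d (v d p)) ->
    (exists h : DMap X1 Y,
        (forall d x, h d (j d x) = a d x) /\ (forall d q, h d (w d q) = b d q)) /\
    (forall h h' : DMap X1 Y,
        (forall d x, h d (j d x) = a d x) -> (forall d q, h d (w d q) = b d q) ->
        (forall d x, h' d (j d x) = a d x) -> (forall d q, h' d (w d q) = b d q) ->
        forall d y, h d y = h' d y).

Definition IsCoprod (D : Cat) (I : Type) (A : I -> DSpace D) (S : DSpace D)
  (inj : forall i, DMap (A i) S) : Prop :=
  forall (Y : DSpace D) (g : forall i, DMap (A i) Y),
    (exists h : DMap S Y, forall i d a, h d (inj i d a) = g i d a) /\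
    (forall h h' : DMap S Y,
        (forall i d a, h d (inj i d a) = g i d a) ->
        (forall i d a, h' d (inj i d a) = g i d a) ->
        forall d y, h d y = h' d y).

Definition IsSeqColim (D : Cat) (Xs : nat -> DSpace D)
  (js : forall n, DMap (Xs n) (Xs n.+1)) (X : DSpace D)
  (ins : forall n, DMap (Xs n) X) : Prop :=
  (forall n d x, ins n.+1 d (js n d x) = ins n d x) /\
  forall (Y : DSpace D) (g : forall n, DMap (Xs n) Y),
    (forall n d x, g n.+1 d (js n d x) = g n d x) ->
    (exists h : DMap X Y, forall n d x, h d (ins n d x) = g n d x) /\
    (forall h h' : DMap X Y,
        (forall n d x, h d (ins n d x) = g n d x) ->
        (forall n d x, h' d (ins n d x) = g n d x) ->
        forall d y, h d y = h' d y).

Definition IsColimTop (D : Cat) (X : DSpace D) (C : topologicalType)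
  (c : forall d, X d -> C) : Prop :=
  (forall d : Obj D, continuous (c d)) /\
  (forall a b (f : Hom a b) x, c b (act X f x) = c a x) /\
  forall (T : topologicalType) (t : forall d, X d -> T),
    (forall d : Obj D, continuous (t d)) ->
    (forall a b (f : Hom a b) x, t b (act X f x) = t a x) ->
    exists! h : C -> T, continuous h /\ forall d x, h (c d x) = t d x.

Arguments IsColimTop {D} X C c.

Definition IsOrbit (D : Cat) (X : DSpace D) : Prop :=
  forall (C : topologicalType) (c : forall d, X d -> C),
    IsColimTop X C c -> exists x0 : C, forall y : C, y = x0.

(** O is the orbit O_x: pullback of X -> colim_D X (constant) along {x} -> colim_D X *)
Definition IsFiber (D : Cat) (X : DSpace D) (C : topologicalType)
  (c : forall d, X d -> C) (x : C) (O : DSpace D) (p : DMap O X) : Prop :=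
  (forall d o, c d (p d o) = x) /\
  forall (Y : DSpace D) (g : DMap Y X),
    (forall d y, c d (g d y) = x) ->
    (exists h : DMap Y O, forall d y, p d (h d y) = g d y) /\
    (forall h h' : DMap Y O,
        (forall d y, p d (h d y) = g d y) ->
        (forall d y, p d (h' d y) = g d y) ->
        forall d y, h d y = h' d y).

Arguments IsFiber {D} X C c x O p.

Definition OfType (D : Cat) (F : DSpace D -> Prop) (X : DSpace D) : Prop :=
  forall (C : topologicalType) (c : forall d, X d -> C),
    IsColimTop X C c ->
    forall (x : C) (O : DSpace D) (p : DMap O X),
      IsFiber X C c x O p -> exists A, F A /\ DIso A O.

(** Indexing: Xs 0 = X^{-1} (empty), Xs (i.+1) = X^i. *)
Definition HasDCW (D : Cat) (F : DSpace D -> Prop) (X : DSpace D) : Prop :=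
  exists (Xs : nat -> DSpace D) (js : forall n, DMap (Xs n) (Xs n.+1))
         (ins : forall n, DMap (Xs n) X),
    EmptyD (Xs 0) /\ IsSeqColim js ins /\
    forall i : nat,
      exists (I : Type) (Ak : I -> DSpace D) (A : DSpace D)
             (inj : forall k, DMap (Ak k) A),
        (forall k, F (Ak k)) /\ IsCoprod inj /\
        exists (phi : DMap (ProdC (Sphere i) A) (Xs i))
               (Phi : DMap (ProdC (Disk i) A) (Xs i.+1)),
          IsPushout phi
            (fun d (p : ProdC (Sphere i) A d) =>
               ((sphere_in_disk p.1, p.2) : ProdC (Disk i) A d))
            (js i) Phi.

(* Main.v *)
From HB Require Import structures.
Require Import Defs.
From mathcomp Require Import all_boot all_order all_algebra all_classical all_reals all_analysis.
From mathcomp Require Import Rstruct Rstruct_topology.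
From Stdlib Require Import Rdefinitions Eqdep Eqdep_dec PeanoNat.
Require Import Defs.
Import Order.TTheory GRing.Theory Num.Theory.
Import numFieldNormedType.Exports.
Local Open Scope classical_set_scope.
Local Open Scope ring_scope.
Set Implicit Arguments.
Unset Strict Implicit.
Unset Printing Implicit Defensive.

Record OpSys (T : Type) := MkOpSys {
  ops : set (set T);
  ops_T : ops setT;
  ops_I : forall A B, ops A -> ops B -> ops (A `&` B);
  ops_U : forall (J : Type) (f : J -> set T), (forall j, ops (f j)) -> ops (\bigcup_j f j) }.

Definition TopOn (T : Type) (S : OpSys T) : Type := T.
HB.instance Definition _ (T : Type) (S : OpSys T) := gen_eqMixin (TopOn S).
HB.instance Definition _ (T : Type) (S : OpSys T) := gen_choiceMixin (TopOn S).
HB.instance Definition _ (T : Type) (S : OpSys T) :=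
  isOpenTopological.Build (TopOn S) (@ops_T T S) (@ops_I T S) (@ops_U T S).

Lemma TopOn_open T (S : OpSys T) (A : set (TopOn S)) : open A = ops S A.
Proof. by []. Qed.

Definition indisc_ops (T : Type) : OpSys T.
Proof.
refine (@MkOpSys T (fun A => A = set0 \/ A = setT) _ _ _).
- by right.
- by move=> A B [->|->] [->|->]; rewrite ?set0I ?setI0 ?setIT ?setTI; auto.
- move=> J f Hf.
  case: (pselect (exists j, f j = setT)) => [[j fj]|nj].
    right; apply/seteqP; split => // x _; exists j => //; by rewrite fj.
  left; apply/seteqP; split => // x [j _ fx].
  case: (Hf j) => fj; first by rewrite fj in fx.
  by exfalso; apply: nj; exists j.
Defined.

Definition Indisc (T : Type) : topologicalType := TopOn (indisc_ops T).

Lemma indisc_cont (X : topologicalType) (T : Type) (f : X -> Indisc T) : continuous f.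
Proof.
apply/continuousP => A; rewrite TopOn_open /= => -[->|->].
  by rewrite preimage_set0; exact: open0.
by rewrite preimage_setT; exact: openT.
Qed.

Section DSetSec.
Variable D : Cat.

Definition DSetSp (G : Obj D -> Type) (actG : forall a b, Hom a b -> G a -> G b)
  (Hid : forall a x, actG a a (idm a) x = x)
  (Hcomp : forall a b c (g : Hom b c) (f : Hom a b) x, actG a c (comp g f) x = actG b c g (actG a b f x)) : DSpace D :=
  @Build_DSpace D (fun d => Indisc (G d)) actG (fun a b f => @indisc_cont _ _ _) Hid Hcomp.

Definition mkDMapI (Z : DSpace D) G actG Hid Hcomp (h : forall d, Z d -> G d)
  (Hn : forall a b (f : Hom a b) x, h b (act Z f x) = actG a b f (h a x)) :
  DMap Z (@DSetSp G actG Hid Hcomp) :=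
  @Build_DMap D Z (DSetSp Hid Hcomp) h (fun d => @indisc_cont _ _ _) Hn.

(* sieve-like classifier *)
Definition OmG (d : Obj D) := forall e, Hom d e -> Prop.
Definition OmAct a b (g : Hom a b) (s : OmG a) : OmG b := fun e f => s e (comp f g).
Lemma OmAct_id a (s : OmG a) : OmAct (idm a) s = s.
Proof.
apply: functional_extensionality_dep => e; apply: funext => f.
by rewrite /OmAct comp_idr.
Qed.
Lemma OmAct_comp a b c (g : Hom b c) (f : Hom a b) (s : OmG a) :
  OmAct (comp g f) s = OmAct g (OmAct f s).
Proof.
apply: functional_extensionality_dep => e; apply: funext => h.
by rewrite /OmAct comp_assoc.
Qed.
Definition Om : DSpace D := DSetSp OmAct_id OmAct_comp.

Definition chiOm (Z : DSpace D) (S : forall d, Z d -> Prop) : DMap Z Om.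
Proof.
refine (@mkDMapI Z _ _ _ _ (fun d z => fun e f => S e (act Z f z)) _).
move=> a b f x; apply: functional_extensionality_dep => e; apply: funext => h.
by rewrite /OmAct act_comp.
Defined.

Lemma chiOm_id (Z : DSpace D) S d z : @chiOm Z S d z d (idm d) = S d z.
Proof. by rewrite /= act_id. Qed.

End DSetSec.

Section Surj.
Variable D : Cat.

Lemma om_eq (Z : DSpace D) (S : forall d, Z d -> Prop) (h : DMap Z (Om D)) :
  (forall d z, h d z = chiOm S d z) -> forall d z, h d z d (idm d) = S d z.
Proof. by move=> H d z; rewrite H chiOm_id. Qed.

Lemma po_surj (P Q X0 X1 : DSpace D) (u : forall d, P d -> X0 d) (v : forall d, P d -> Q d)
  (j : DMap X0 X1) (w : DMap Q X1) :
  IsPushout u v j w -> forall d z, (exists x, z = j d x) \/ (exists q, z = w d q).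
Proof.
move=> [_ Hpo] d z.
pose S := fun d (z : X1 d) => (exists x, z = j d x) \/ (exists q, z = w d q).
have [_ Hu] := Hpo (Om D) (chiOm (fun _ _ => True)) (chiOm (fun _ _ => True)) (fun _ _ => erefl).
have := Hu (chiOm S) (chiOm (fun _ _ => True)).
have T1 : forall (d : Obj D) (e : Obj D) (f : Hom d e) x,
  S e (act X1 f (j d x)) = True.
  by move=> d' e f x; apply: propext; split => // _; left; exists (act X0 f x); rewrite dmap_nat.
have T2 : forall (d : Obj D) (e : Obj D) (f : Hom d e) q,
  S e (act X1 f (w d q)) = True.
  by move=> d' e f q; apply: propext; split => // _; right; exists (act Q f q); rewrite dmap_nat.
move=> /(_ _ _ _ _ d z) H.
have := H.
have E : chiOm S d z = chiOm (fun _ _ => True) d z.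
  apply: H.
  - move=> d' x /=; apply: functional_extensionality_dep => e; apply: funext => f; exact: T1.
  - move=> d' x /=; apply: functional_extensionality_dep => e; apply: funext => f; exact: T2.
  - by [].
  - by [].
move=> _.
have := f_equal (fun s => s d (idm d)) E.
by rewrite chiOm_id /= => HE; move: Logic.I; rewrite -HE.
Qed.

Lemma colim_surj (Xs : nat -> DSpace D) (js : forall n, DMap (Xs n) (Xs n.+1)) (X : DSpace D)
  (ins : forall n, DMap (Xs n) X) :
  IsSeqColim js ins -> forall d z, exists n x, z = ins n d x.
Proof.
move=> [Hc Hco] d z.
pose S := fun d (z : X d) => exists n x, z = ins n d x.
have [_ Hu] := Hco (Om D) (fun n => chiOm (fun _ _ => True)) (fun _ _ _ => erefl).
have E : chiOm S d z = chiOm (fun _ _ => True) d z.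
  apply: Hu => //.
  move=> n d' x /=; apply: functional_extensionality_dep => e; apply: funext => f.
  apply: propext; split => // _; exists n, (act (Xs n) f x); by rewrite dmap_nat.
have := f_equal (fun s => s d (idm d)) E.
by rewrite chiOm_id /= => HE; move: Logic.I; rewrite -HE.
Qed.

Lemma coprod_surj (I : Type) (Ak : I -> DSpace D) (A : DSpace D) (inj : forall k, DMap (Ak k) A) :
  IsCoprod inj -> forall d z, exists k a, z = inj k d a.
Proof.
move=> Hco d z.
pose S := fun d (z : A d) => exists k a, z = inj k d a.
have [_ Hu] := Hco (Om D) (fun n => chiOm (fun _ _ => True)).
have E : chiOm S d z = chiOm (fun _ _ => True) d z.
  apply: Hu => //.
  move=> n d' x /=; apply: functional_extensionality_dep => e; apply: funext => f.
  apply: propext; split => // _; exists n, (act (Ak n) f x); by rewrite dmap_nat.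
have := f_equal (fun s => s d (idm d)) E.
by rewrite chiOm_id /= => HE; move: Logic.I; rewrite -HE.
Qed.

Lemma colimtop_surj (X : DSpace D) (C : topologicalType) (c : forall d, X d -> C) :
  IsColimTop X C c -> forall y : C, exists d x, y = c d x.
Proof.
move=> [Hcc [Hcn Hu]] y.
have [h [_ Hh]] := Hu (Indisc Prop) (fun _ _ => True) (fun d => @indisc_cont _ _ _) (fun _ _ _ _ => erefl).
have E1 := Hh (fun _ => True) (conj (@indisc_cont _ _ _) (fun _ _ => erefl)).
have E2 := Hh (fun y : C => exists d x, y = c d x) (conj (@indisc_cont _ _ _)
   (fun d x => propext (conj (fun _ => Logic.I) (fun _ => ex_intro _ d (ex_intro _ x erefl))))).
have := f_equal (fun g => g y) (etrans (esym E1) E2).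
by move=> /= <-.
Qed.

End Surj.

Section Yoneda.
Variable D : Cat.
Variable e : Obj D.

Definition yops (d : Obj D) : OpSys (Hom d e -> bool).
Proof.
refine (@MkOpSys _ (fun W => forall y, W y -> exists fs : seq (Hom d e),
   (forall f, List.In f fs -> y f = false) /\
   (forall y', (forall f, List.In f fs -> y' f = false) -> W y')) _ _ _).
- by move=> y _; exists [::]; split.
- move=> A B HA HB y [Ay By].
  have [fs1 [H1 K1]] := HA y Ay; have [fs2 [H2 K2]] := HB y By.
  exists (fs1 ++ fs2); split.
    by move=> f Hf; case: (List.in_app_or _ _ _ Hf) => ?; [apply: H1|apply: H2].
  move=> y' Hy'; split.
    by apply: K1 => f Hf; apply: Hy'; apply: List.in_or_app; left.
  by apply: K2 => f Hf; apply: Hy'; apply: List.in_or_app; right.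
- move=> J f Hf y [j _ fy].
  have [fs [H K]] := Hf j y fy.
  by exists fs; split => // y' Hy'; exists j => //; apply: K.
Defined.

Definition YeT (d : Obj D) : topologicalType := TopOn (yops d).

Definition YeAct a b (g : Hom a b) (y : YeT a) : YeT b := fun f => y (comp f g).

Lemma YeAct_cont a b (g : Hom a b) : continuous (YeAct g).
Proof.
apply/continuousP => W; rewrite !TopOn_open /= => HW y Wy.
have [fs [H K]] := HW _ Wy.
exists (List.map (fun f => comp f g) fs); split.
  move=> f' /(List.in_map_iff _ fs f') [f [<- Hf]]; exact: H.
move=> y' Hy'; apply: K => f Hf; apply: Hy'; apply: List.in_map; exact: Hf.
Qed.

Lemma YeAct_id a (y : YeT a) : YeAct (idm a) y = y.
Proof. by apply: funext => f; rewrite /YeAct comp_idr. Qed.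
Lemma YeAct_comp a b c (g : Hom b c) (f : Hom a b) (y : YeT a) :
  YeAct (comp g f) y = YeAct g (YeAct f y).
Proof. by apply: funext => h; rewrite /YeAct comp_assoc. Qed.

Definition Ye : DSpace D := @Build_DSpace D YeT YeAct YeAct_cont YeAct_id YeAct_comp.

Lemma Ye_test (Z : DSpace D) (V : set (Z e)) (h : DMap Z Ye) :
  (forall z, h e z (idm e) = asbool (V z)) -> closed V.
Proof.
move=> Hh.
have O : open (fun y : Ye e => y (idm e) = false).
  rewrite TopOn_open /= => y Hy; exists [:: idm e]; split.
    by move=> f [<-|[]].
  by move=> y' Hy'; apply: Hy'; left.
have := (continuousP _).1 (dmap_cont h e) _ O.
have -> : h e @^-1` (fun y : Ye e => y (idm e) = false) = ~` V.
  apply/seteqP; split => z /=; rewrite Hh.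
    by move=> /asboolPn.
  by move=> Hz; apply/asboolPn.
by move=> HO; rewrite -[V]setCK closedC.
Qed.

Lemma finI_open (Z : topologicalType) (T : Type) (P : T -> set Z) (fs : seq T) :
  (forall f, open (P f)) -> open (fun z => forall f, List.In f fs -> P f z).
Proof.
move=> HP; elim: fs => [|f fs IH].
  have -> : (fun z : Z => forall f, List.In f [::] -> P f z) = setT.
    by apply/seteqP; split.
  exact: openT.
have -> : (fun z : Z => forall f', List.In f' (f :: fs) -> P f' z) =
   P f `&` (fun z => forall f, List.In f fs -> P f z).
  apply/seteqP; split => z.
    by move=> H; split; [apply: H; left | move=> f' Hf'; apply: H; right].
  by move=> [H1 H2] f' [<-|Hf'] //; apply: H2.
exact: openI.
Qed.

Definition chiY (Z : DSpace D) (V : set (Z e)) (HV : closed V) : DMap Z Ye.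
Proof.
refine (@Build_DMap D Z Ye (fun d z => fun f => asbool (V (act Z f z))) _ _).
- move=> d; apply/continuousP => W; rewrite TopOn_open /= => HW.
  rewrite openE => z Wz.
  have [fs [H K]] := HW _ Wz.
  apply: (@filterS _ _ _ (fun z' => forall f, List.In f fs -> (~` (act Z f @^-1` V)) z')).
    move=> z' Hz'; apply: K => f Hf; apply/asboolPn; exact: Hz'.
  apply: open_nbhs_nbhs; split.
    apply: finI_open => f; apply: closed_openC.
    by apply: (proj1 (continuous_closedP _)) HV; exact: act_cont.
  by move=> f Hf /=; apply/asboolPn; apply/negbT; exact: H.
- by move=> a b f x; apply: funext => g; rewrite /= /YeAct act_comp.
Defined.

Lemma chiY_id (Z : DSpace D) (V : set (Z e)) (HV : closed V) z :
  chiY HV e z (idm e) = asbool (V z).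
Proof. by rewrite /= act_id. Qed.

Lemma closed_po (P Q X0 X1 : DSpace D) (u : forall d, P d -> X0 d) (v : forall d, P d -> Q d)
  (j : DMap X0 X1) (w : DMap Q X1) (V : set (X1 e)) :
  (forall a b (f : Hom a b) p, u b (act P f p) = act X0 f (u a p)) ->
  (forall a b (f : Hom a b) p, v b (act P f p) = act Q f (v a p)) ->
  IsPushout u v j w -> closed (fun x => V (j e x)) -> closed (fun q => V (w e q)) -> closed V.
Proof.
move=> Hu Hv Hpo C1 C2.
have cp : forall d p, chiY C1 d (u d p) = chiY C2 d (v d p).
  by move=> d p; apply: funext => f; rewrite /= -Hu -Hv Hpo.1.
have [[h [Hh1 Hh2]] _] := Hpo.2 Ye (chiY C1) (chiY C2) cp.
apply: (Ye_test (h := h)) => z.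
case: (po_surj Hpo z) => [[x ->]|[q ->]].
  by rewrite Hh1 chiY_id.
by rewrite Hh2 chiY_id.
Qed.

Lemma closed_colim (Xs : nat -> DSpace D) (js : forall n, DMap (Xs n) (Xs n.+1)) (X : DSpace D)
  (ins : forall n, DMap (Xs n) X) (V : set (X e)) :
  IsSeqColim js ins -> (forall n, closed (fun x => V (ins n e x))) -> closed V.
Proof.
move=> Hco C.
have cp : forall n d x, chiY (C n.+1) d (js n d x) = chiY (C n) d x.
  by move=> n d x; apply: funext => f; rewrite /= -dmap_nat Hco.1.
have [[h Hh] _] := Hco.2 Ye (fun n => chiY (C n)) cp.
apply: (Ye_test (h := h)) => z.
have [n [x ->]] := colim_surj Hco z.
by rewrite Hh chiY_id.
Qed.

Lemma closed_coprod (I : Type) (Ak : I -> DSpace D) (A : DSpace D) (inj : forall k, DMap (Ak k) A)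
  (V : set (A e)) :
  IsCoprod inj -> (forall k, closed (fun x => V (inj k e x))) -> closed V.
Proof.
move=> Hco C.
have [[h Hh] _] := Hco Ye (fun k => chiY (C k)).
apply: (Ye_test (h := h)) => z.
have [k [x ->]] := coprod_surj Hco z.
by rewrite Hh chiY_id.
Qed.

End Yoneda.

Section ColimC.
Variable D : Cat.
Variable A : DSpace D.

Definition Sig := {d : Obj D & A d}.
Definition gen (x y : Sig) := exists (a b : Obj D) (f : Hom a b) (z : A a),
  x = existT _ a z /\ y = existT _ b (act A f z).
Definition Req (x y : Sig) := forall E : Sig -> Sig -> Prop,
  (forall u, E u u) -> (forall u v, E u v -> E v u) ->
  (forall u v w, E u v -> E v w -> E u w) -> (forall u v, gen u v -> E u v) -> E x y.
Lemma Req_refl x : Req x x. Proof. move=> E r _ _ _; exact: r. Qed.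
Lemma Req_sym x y : Req x y -> Req y x.
Proof. move=> H E r s t g; apply: (s x y); exact: (H E r s t g). Qed.
Lemma Req_trans x y z : Req x y -> Req y z -> Req x z.
Proof. move=> H1 H2 E r s t g; apply: (t _ y); [exact: (H1 E r s t g)|exact: (H2 E r s t g)]. Qed.
Lemma Req_gen x y : gen x y -> Req x y.
Proof. move=> H E r s t g; exact: g. Qed.

Definition QT := {P : Sig -> Prop | exists x, P = Req x}.
Definition cls (x : Sig) : QT := exist _ (Req x) (ex_intro _ x erefl).

Lemma sig_eq (P : (Sig -> Prop) -> Prop) (a b : Sig -> Prop) pa pb :
  a = b -> exist P a pa = exist P b pb.
Proof. by move=> E; subst; congr exist; apply: Prop_irrelevance. Qed.

Lemma cls_eq x y : Req x y -> cls x = cls y.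
Proof.
move=> H; apply: sig_eq; apply: funext => u; apply: propext; split => Hu.
  exact: Req_trans (Req_sym H) Hu.
exact: Req_trans H Hu.
Qed.

Lemma cls_surj (P : QT) : exists x, P = cls x.
Proof. case: P => P [x Hx]; exists x; exact: sig_eq. Qed.

Definition qops : OpSys QT.
Proof.
refine (@MkOpSys QT (fun U => forall d, open (fun a : A d => U (cls (existT _ d a)))) _ _ _).
- by move=> d; exact: openT.
- by move=> U V HU HV d; exact: openI.
- move=> J f Hf d; apply: bigcup_open => j _; exact: Hf.
Defined.

Definition Qtop : topologicalType := TopOn qops.
Definition qmap d (a : A d) : Qtop := cls (existT _ d a).

Lemma qmap_colim : IsColimTop A Qtop qmap.
Proof.
split.
  by move=> d; apply/continuousP => W; rewrite TopOn_open /= => HW; exact: HW.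
split.
  move=> a b f x; apply: cls_eq; apply: Req_sym; apply: Req_gen.
  by exists a, b, f, x.
move=> T t tc tn.
pose t' (x : Sig) := t (projT1 x) (projT2 x).
have tr : forall x y, Req x y -> t' x = t' y.
  move=> x y H; apply: (H (fun u v => t' u = t' v)).
  - by [].
  - by move=> u v ->.
  - by move=> u v w -> ->.
  - by move=> u v [a [b [f [z [-> ->]]]]]; rewrite /t' /= tn.
pose hq (P : Qtop) : T := t' (proj1_sig (cid (proj2_sig P))).
have hqE : forall x, hq (cls x) = t' x.
  move=> x; rewrite /hq; case: (cid _) => y /= Hy; apply: tr.
  by rewrite -Hy; exact: Req_refl.
exists hq; split.
  split; last by move=> d x; rewrite /qmap hqE.
  apply/continuousP => W oW; rewrite TopOn_open /= => d.
  have -> : (fun a : A d => (hq @^-1` W) (cls (existT _ d a))) = t d @^-1` W.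
    by apply: funext => a; rewrite /preimage /= hqE.
  exact: (proj1 (continuousP _)) (tc d) _ oW.
move=> h' [_ Hh']; apply: funext => P.
have [[d a] ->] := cls_surj P.
by rewrite hqE /t' /= -Hh'.
Qed.

Lemma orbit_const (HO : IsOrbit A) (T : topologicalType) (t : forall d, A d -> T) :
  (forall d, continuous (t d)) -> (forall a b (f : Hom a b) x, t b (act A f x) = t a x) ->
  forall d a d' a', t d a = t d' a'.
Proof.
move=> tc tn d a d' a'.
have [x0 Hx0] := HO _ _ qmap_colim.
have [_ [_ Hu]] := qmap_colim.
have [h [[_ Hh] _]] := Hu T t tc tn.
by rewrite -Hh -(Hh d') (Hx0 (qmap a)) (Hx0 (qmap a')).
Qed.

End ColimC.

Lemma cont_sum (T : topologicalType) (I : Type) (r : seq I) (F : I -> T -> R) :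
  (forall i, continuous (F i)) -> continuous (fun x => \sum_(i <- r) F i x).
Proof.
move=> HF; elim: r => [|i r IH].
  under [fun x => _]funext do rewrite big_nil.
  exact: cst_continuous.
under [fun x => _]funext do rewrite big_cons.
move=> x; exact: (@continuousD R R^o T (F i) (fun x => \sum_(j <- r) F j x) x (HF i x) (IH x)).
Qed.

Lemma sqnorm_cont n : continuous (@sqnorm n).
Proof.
rewrite /sqnorm; apply: cont_sum => i v.
apply: (@continuousM _ _ (fun v : 'rV[R]_n => v ord0 i) (fun v : 'rV[R]_n => v ord0 i));
  exact: coord_continuous.
Qed.

Lemma val_cont_set (X : topologicalType) (A : set X) : continuous (set_val : set_type A -> X).
Proof. exact: (@initial_continuous (A : Type) X set_val). Qed.

Lemma disk_point_closed n (t : Disk n) : closed [set t].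
Proof.
have -> : [set t] = (set_val : Disk n -> 'rV[R]_n) @^-1` [set set_val t].
  apply/seteqP; split => s /=; first by move=> ->.
  by move=> H; apply: val_inj.
apply: (proj1 (continuous_closedP _)); first exact: val_cont_set.
apply: accessible_closed_set1; apply: hausdorff_accessible.
exact: norm_hausdorff.
Qed.

Lemma sph_of (n : nat) (s : Disk n) : sqnorm (set_val s) = 1 -> {s' : Sphere n | sphere_in_disk s' = s}.
Proof.
move=> H.
have Hm : set_val s \in [set v : 'rV[R]_n | sqnorm v = 1] by apply: mem_set.
exists (exist _ (set_val s) Hm); apply: val_inj => //.
Qed.

Lemma sphere_img_closed n (B : topologicalType) (L : set (Sphere n * B)) : closed L ->
  closed (fun p : Disk n * B => exists s', p.1 = sphere_in_disk s' /\ L (s', p.2)).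
Proof.
move=> CL.
set K := (fun p : Disk n * B => _).
rewrite -[K]setCK closedC openE => -[s q] /= nK.
case: (pselect (sqnorm (set_val s) = 1)) => Hs.
  have [s' Es'] := sph_of Hs.
  have nL : ~ L (s', q) by move=> Lq; apply: nK; exists s'; split.
  have oL : open (~` L) by exact: closed_openC.
  have := open_nbhs_nbhs (conj oL nL).
  case=> [[P Q'] /= [nP nQ] sub].
  case: nP => Bs [[M oM EM] Bss sub2].
  exists ((set_val : Disk n -> 'rV[R]_n) @^-1` M, Q') => /=.
    split => //.
    apply: val_cont_set; apply: open_nbhs_nbhs; split => //.
    by rewrite -Es' /=; rewrite -EM in Bss.
  move=> [s2 q2] [/= Ms2 Qq2] [s2' [/= E2 L2]].
  have : (P `*` Q') (s2', q2).
    split => //=; apply: sub2; rewrite -EM /=.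
    by move: Ms2; rewrite E2.
  by move=> /sub; apply.
have oU : open ((fun s : Disk n => sqnorm (set_val s)) @^-1` (~` [set (1 : R)])).
  apply: (proj1 (continuousP _)).
    move=> x; apply: continuous_comp; [exact: val_cont_set | exact: sqnorm_cont].
  apply: closed_openC.
  exact: (@accessible_closed_set1 R (hausdorff_accessible (@norm_hausdorff _ R^o)) 1).
exists ((fun s : Disk n => sqnorm (set_val s)) @^-1` (~` [set (1 : R)]), setT) => /=.
  split; last exact: filterT.
  by apply: open_nbhs_nbhs; split.
move=> [s2 q2] [/= Hs2 _] [s2' [/= E2 _]].
apply: Hs2; rewrite E2 /=.
by move: (set_valP s2') => /=.
Qed.

Lemma closed_prod (X Y : topologicalType) (S1 : set X) (S2 : set Y) :
  closed S1 -> closed S2 -> closed (fun p : X * Y => S1 p.1 /\ S2 p.2).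
Proof.
move=> C1 C2; set K := fun p => _.
rewrite -[K]setCK closedC openE => -[x y] /= nK.
case: (pselect (S1 x)) => h1.
  have h2 : ~ S2 y by move=> h2; apply: nK.
  exists (setT, ~` S2) => /=.
    split; first exact: filterT.
    by apply: open_nbhs_nbhs; split => //; exact: closed_openC.
  by move=> [a b] [_ /= nb] [_ ].
exists (~` S1, setT) => /=.
  split; last exact: filterT.
  by apply: open_nbhs_nbhs; split => //; exact: closed_openC.
by move=> [a b] [/= na _] [].
Qed.

Lemma closed_empty (X : topologicalType) (S : set X) : (forall x, ~ S x) -> closed S.
Proof.
move=> H; have -> : S = set0 by apply/seteqP; split => x // /H.
exact: closed0.
Qed.

Unset Implicit Arguments.
Section Main.
Variable D : Cat.
Variable F : DSpace D -> Prop.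
Hypothesis HF : forall A, F A -> IsOrbit A.
Variable X : DSpace D.
Variable Xs : nat -> DSpace D.
Variable js : forall n, DMap (Xs n) (Xs n.+1).
Variable ins : forall n, DMap (Xs n) X.
Hypothesis E0 : EmptyD (Xs 0).
Hypothesis Hcol : IsSeqColim js ins.
Variable I : nat -> Type.
Variable Ak : forall i, I i -> DSpace D.
Variable A : nat -> DSpace D.
Variable inj : forall i k, DMap (Ak i k) (A i).
Hypothesis HAk : forall i k, F (Ak i k).
Hypothesis Hcop : forall i, IsCoprod (inj i).
Variable phi : forall i, DMap (ProdC (Sphere i) (A i)) (Xs i).
Variable Phi : forall i, DMap (ProdC (Disk i) (A i)) (Xs i.+1).
Hypothesis Hpo : forall i, IsPushout (phi i)
  (fun d (p : ProdC (Sphere i) (A i) d) => ((sphere_in_disk p.1, p.2) : ProdC (Disk i) (A i) d))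
  (js i) (Phi i).

Definition TagG i (e : Obj D) := {k : I i & Ak i k e}.
Definition tagAct i a b (f : Hom a b) (x : TagG i a) : TagG i b :=
  existT _ (projT1 x) (act (Ak i (projT1 x)) f (projT2 x)).
Lemma tagAct_id i a (x : TagG i a) : tagAct i a a (idm a) x = x.
Proof. by case: x => k y; rewrite /tagAct /= act_id. Qed.
Lemma tagAct_comp i a b c (g : Hom b c) (f : Hom a b) (x : TagG i a) :
  tagAct i a c (comp g f) x = tagAct i b c g (tagAct i a b f x).
Proof. by case: x => k y; rewrite /tagAct /= act_comp. Qed.
Definition TagSp i : DSpace D := DSetSp (@tagAct_id i) (@tagAct_comp i).
Definition tagIn i k : DMap (Ak i k) (TagSp i) :=
  @mkDMapI D (Ak i k) (TagG i) (@tagAct i) (@tagAct_id i) (@tagAct_comp i)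
    (fun d a => existT _ k a) (fun _ _ _ _ => erefl).
Definition tagM i : DMap (A i) (TagSp i) :=
  proj1_sig (cid (proj1 (Hcop i (TagSp i) (tagIn i)))).
Lemma tagM_inj i k d a : tagM i d (inj i k d a) = existT _ k a.
Proof. by rewrite /tagM; case: cid => h /= Hh; rewrite Hh. Qed.

Definition CellG (e : Obj D) := {n : nat & (Disk n * TagG n e)%type}.
Definition cellAct a b (f : Hom a b) (c : CellG a) : CellG b :=
  existT _ (projT1 c) ((projT2 c).1, tagAct _ _ _ f (projT2 c).2).
Lemma cellAct_id a (c : CellG a) : cellAct a a (idm a) c = c.
Proof. by case: c => n [s x]; rewrite /cellAct /= tagAct_id. Qed.
Lemma cellAct_comp a b c (g : Hom b c) (f : Hom a b) (x : CellG a) :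
  cellAct a c (comp g f) x = cellAct b c g (cellAct a b f x).
Proof. by case: x => n [s y]; rewrite /cellAct /= tagAct_comp. Qed.
Definition CellSp : DSpace D := DSetSp cellAct_id cellAct_comp.

Lemma sid_inj n : injective (@sphere_in_disk n).
Proof. by move=> a b /(f_equal set_val) /= E; apply: val_inj. Qed.

Definition bfun n (g : DMap (Xs n) CellSp) d (p : ProdC (Disk n) (A n) d) : CellG d :=
  match pselect (sqnorm (set_val p.1) = 1) with
  | left H => g d (phi n d ((proj1_sig (sph_of H), p.2) : ProdC (Sphere n) (A n) d))
  | right _ => existT _ n (p.1, tagM n d p.2)
  end.

Lemma bfun_nat n (g : DMap (Xs n) CellSp) a b (f : Hom a b) (p : ProdC (Disk n) (A n) a) :
  bfun n g b (act (ProdC (Disk n) (A n)) f p) = cellAct a b f (bfun n g a p).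
Proof.
case: p => s q; rewrite /bfun /=; case: pselect => H /=.
  have -> : ((proj1_sig (sph_of H), act (A n) f q) : ProdC (Sphere n) (A n) b)
     = act (ProdC (Sphere n) (A n)) f (proj1_sig (sph_of H), q) by [].
  by rewrite (dmap_nat (phi n)) (dmap_nat g).
by rewrite (dmap_nat (tagM n)).
Qed.

Definition bD n (g : DMap (Xs n) CellSp) : DMap (ProdC (Disk n) (A n)) CellSp :=
  @mkDMapI D _ CellG cellAct cellAct_id cellAct_comp (bfun n g) (@bfun_nat n g).

Lemma step_ex n (g : DMap (Xs n) CellSp) : exists g' : DMap (Xs n.+1) CellSp,
  (forall d x, g' d (js n d x) = g d x) /\ (forall d q, g' d (Phi n d q) = bfun n g d q).
Proof.
have cp : forall d p, g d (phi n d p) = bD n g d (sphere_in_disk p.1, p.2).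
  move=> d [s' q]; rewrite /= /bfun /=; case: pselect => H /=.
    case: (sph_of H) => s'' /= /sid_inj -> //.
  by exfalso; apply: H; move: (set_valP s').
have [[h Hh] _] := (Hpo n).2 CellSp g (bD n g) cp.
by exists h.
Qed.

Definition G0 : DMap (Xs 0) CellSp :=
  @mkDMapI D _ CellG cellAct cellAct_id cellAct_comp
    (fun d x => False_rect _ (E0 d x)) (fun a b f x => False_ind _ (E0 a x)).

Fixpoint G n : DMap (Xs n) CellSp :=
  match n with 0 => G0 | m.+1 => proj1_sig (cid (step_ex m (G m))) end.

Lemma G_js n d x : G n.+1 d (js n d x) = G n d x.
Proof. by rewrite /=; case: cid => g' [H1 H2] /=; rewrite H1. Qed.
Lemma G_Phi n d q : G n.+1 d (Phi n d q) = bfun n (G n) d q.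
Proof. by rewrite /=; case: cid => g' [H1 H2] /=; rewrite H2. Qed.

Definition HM : DMap X CellSp := proj1_sig (cid (proj1 (Hcol.2 CellSp G G_js))).
Lemma HM_ins n d y : HM d (ins n d y) = G n d y.
Proof. by rewrite /HM; case: cid => h /= Hh; rewrite Hh. Qed.

Lemma HM_cell n d s k a : sqnorm (set_val s) <> 1 ->
  HM d (ins n.+1 d (Phi n d (s, inj n k d a))) = existT _ n (s, existT _ k a).
Proof.
move=> Hs; rewrite HM_ins G_Phi /bfun /=; case: pselect => // _.
by rewrite tagM_inj.
Qed.

Lemma G_lt n d y : leq (projT1 (G n d y)).+1 n.
Proof.
elim: n d y => [|n IH] d y; first by case: (E0 d y).
case: (po_surj (Hpo n) y) => [[x ->]|[q ->]].
  by rewrite G_js; apply: ltn_trans (IH d x) _.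
rewrite G_Phi /bfun; case: pselect => H /=.
  by apply: ltn_trans (IH _ _) _.
by [].
Qed.

Lemma HM_lt n d y : leq (projT1 (HM d (ins n d y))).+1 n.
Proof. by rewrite HM_ins; exact: G_lt. Qed.

Lemma decomp_n n d (y : Xs n d) : exists m s k a, sqnorm (set_val s) <> 1 /\
  ins n d y = ins m.+1 d (Phi m d (s, inj m k d a)).
Proof.
elim: n d y => [|n IH] d y; first by case: (E0 d y).
case: (po_surj (Hpo n) y) => [[x ->]|[[s q] ->]].
  by rewrite Hcol.1; exact: IH.
case: (pselect (sqnorm (set_val s) = 1)) => H.
  case: (sph_of H) => s' Es'; rewrite -Es'.
  have -> : Phi n d (sphere_in_disk s', q) = js n d (phi n d (s', q)).
    by rewrite (Hpo n).1.
  by rewrite Hcol.1; exact: IH.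
have [k [a ->]] := coprod_surj (Hcop n) q.
by exists n, s, k, a.
Qed.

Lemma decomp d (z : X d) : exists m s k a, sqnorm (set_val s) <> 1 /\
  z = ins m.+1 d (Phi m d (s, inj m k d a)).
Proof.
have [n [y ->]] := colim_surj Hcol z.
exact: decomp_n.
Qed.


Lemma closed_ext (T : topologicalType) (S1 S2 : set T) :
  (forall x, S1 x <-> S2 x) -> closed S1 -> closed S2.
Proof.
move=> H; have -> : S1 = S2 by apply/seteqP; split => x /H.
by [].
Qed.

Definition gfun i k (t : Disk i) d (b : Ak i k d) : X d :=
  ins i.+1 d (Phi i d ((t, inj i k d b) : ProdC (Disk i) (A i) d)).

Lemma pair_cst_cont (T U V : topologicalType) (t : T) (f : U -> V) :
  continuous f -> continuous (fun b => (t, f b)).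
Proof. move=> fc b; apply: cvg_pair => //; [exact: cvg_cst | exact: fc]. Qed.

Lemma gfun_cont i k t d : continuous (gfun i k t d).
Proof.
move=> b.
apply: (@continuous_comp _ _ _ (fun b => ((t, inj i k d b) : ProdC (Disk i) (A i) d))
   (fun p => ins i.+1 d (Phi i d p))).
  by apply: pair_cst_cont; exact: dmap_cont.
apply: continuous_comp; exact: dmap_cont.
Qed.

Lemma gfun_nat i k t a b (f : Hom a b) (y : Ak i k a) :
  gfun i k t b (act (Ak i k) f y) = act X f (gfun i k t a y).
Proof.
rewrite /gfun (dmap_nat (inj i k)).
have -> : ((t, act (A i) f (inj i k a y)) : ProdC (Disk i) (A i) b)
   = act (ProdC (Disk i) (A i)) f (t, inj i k a y) by [].
by rewrite (dmap_nat (Phi i)) (dmap_nat (ins i.+1)).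
Qed.

Definition gD i k t : DMap (Ak i k) X :=
  @Build_DMap D (Ak i k) X (gfun i k t) (gfun_cont i k t) (gfun_nat i k t).

Lemma cell_closed e i (k : I i) (t : Disk i) (Ht : sqnorm (set_val t) <> 1) (U : set (Ak i k e)) :
  closed U -> closed (fun z : X e => exists u, U u /\ z = gfun i k t e u).
Proof.
move=> CU.
apply: (closed_colim Hcol) => n.
elim: n => [|n IH].
  by apply: closed_empty => y; case: (E0 e y).
apply: (closed_po (fun a b f p => dmap_nat (phi n) f p) (fun a b f p => erefl) (Hpo n)).
  by apply: closed_ext IH => y /=; rewrite Hcol.1.
case: (PeanoNat.Nat.eq_dec n i) => [Eni|Nni].
  subst n.
  have Cinj : closed (fun q : A i e => exists u, U u /\ q = inj i k e u).
    apply: (closed_coprod (Hcop i)) => k'.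
    case: (pselect (k' = k)) => [Ek|Nk].
      subst k'; apply: closed_ext CU => a; split.
        by move=> Ua; exists a.
      move=> [u [Uu E]].
      have E2 := f_equal (tagM i e) E; rewrite !tagM_inj in E2.
      by rewrite (Eqdep.EqdepTheory.inj_pair2 _ _ _ _ _ E2).
    apply: closed_empty => a [u [_ E]].
    have E2 := f_equal (tagM i e) E; rewrite !tagM_inj in E2.
    exact: Nk (f_equal (@projT1 _ _) E2).
  have CP : closed (T := ProdC (Disk i) (A i) e)
     (fun p => p.1 = t /\ (exists u, U u /\ p.2 = inj i k e u))
     := closed_prod (@disk_point_closed i t) Cinj.
  apply: closed_ext CP => -[s q] /=; split.
    by move=> [-> [u [Uu ->]]]; exists u.
  move=> [u [Uu E]].
  case: (pselect (sqnorm (set_val s) = 1)) => Hs.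
    exfalso; case: (sph_of Hs) => s' Es'.
    move: E; rewrite -Es'.
    have -> : Phi i e (sphere_in_disk s', q) = js i e (phi i e (s', q)) by rewrite (Hpo i).1.
    rewrite Hcol.1 => E.
    have := HM_lt i e (phi i e (s', q)).
    by rewrite E /gfun HM_cell //= ltnn.
  have [k' [a Eq]] := coprod_surj (Hcop i) q.
  move: E; rewrite Eq /gfun => E.
  have := f_equal (HM e) E; rewrite !HM_cell // => E2.
  have E3 := Eqdep_dec.inj_pair2_eq_dec _ PeanoNat.Nat.eq_dec _ _ _ _ E2.
  have Es := f_equal fst E3; have E4 := f_equal snd E3; simpl in Es, E4.
  split => //.
  exists u; split => //.
  exact: (f_equal (fun x => inj i (projT1 x) e (projT2 x)) E4).
have CL : closed (fun p : Sphere n * A n e => exists u, U u /\ ins n e (phi n e p) = gfun i k t e u).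
  exact: (proj1 (continuous_closedP (phi n e)) (dmap_cont (phi n) e) _ IH).
apply: closed_ext (sphere_img_closed CL) => -[s q] /=; split.
  move=> [s' [Es' [u [Uu E]]]]; exists u; split => //.
  rewrite Es' -E.
  have -> : Phi n e (sphere_in_disk s', q) = js n e (phi n e (s', q)) by rewrite (Hpo n).1.
  by rewrite Hcol.1.
move=> [u [Uu E]].
case: (pselect (sqnorm (set_val s) = 1)) => Hs.
  case: (sph_of Hs) => s' Es'; exists s'; split => //.
  exists u; split => //; rewrite -E -Es'.
  have -> : Phi n e (sphere_in_disk s', q) = js n e (phi n e (s', q)) by rewrite (Hpo n).1.
  by rewrite Hcol.1.
exfalso.
have [k' [a Eq]] := coprod_surj (Hcop n) q.
move: E; rewrite Eq /gfun => E.
have := f_equal (HM e) E; rewrite !HM_cell // => /(f_equal (@projT1 _ _)) /=.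
exact: Nni.
Qed.


Definition compD (Y1 Y2 Y3 : DSpace D) (g : DMap Y2 Y3) (f : DMap Y1 Y2) : DMap Y1 Y3.
Proof.
refine (@Build_DMap D Y1 Y3 (fun d y => g d (f d y)) _ _).
- move=> d y; apply: continuous_comp; exact: dmap_cont.
- by move=> a b h y; rewrite !dmap_nat.
Defined.

Definition idD (Y : DSpace D) : DMap Y Y :=
  @Build_DMap D Y Y (fun d y => y) (fun d y => @cvg_id _ _) (fun _ _ _ _ => erefl).

Definition CellK := {n : nat & (Disk n * I n)%type}.
Definition tauf d (z : X d) : Indisc CellK :=
  existT _ (projT1 (HM d z)) ((projT2 (HM d z)).1, projT1 (projT2 (HM d z)).2).

Lemma main_of : OfType F X.
Proof.
move=> C c Hc x O p [Hp Hfib].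
have [d0 [z0 Ex]] := colimtop_surj Hc x.
subst x.
have [i [t [k [a0 [Ht Ez0]]]]] := decomp d0 z0.
exists (Ak i k); split; first exact: HAk.
pose g := gD i k t.
have Hg : forall d b, c d (g d b) = c d0 z0.
  move=> d b.
  have gc : forall d', continuous (fun y => c d' (g d' y)).
    move=> d' y; apply: continuous_comp; [exact: dmap_cont | exact: Hc.1].
  have gn : forall a b' (f : Hom a b') y, c b' (g b' (act (Ak i k) f y)) = c a (g a y).
    by move=> a b' f y; rewrite (dmap_nat g) Hc.2.1.
  have H := @orbit_const D (Ak i k) (HF (Ak i k) (HAk i k)) C (fun d b => c d (g d b)) gc gn d b d0 a0.
  rewrite Ez0; exact: H.
have [[alpha Halpha] _] := Hfib (Ak i k) g Hg.
have ginj : forall d b b', g d b = g d b' -> b = b'.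
  move=> d b b' E; have := f_equal (HM d) E; rewrite /= /gfun !HM_cell // => E2.
  have E3 := Eqdep_dec.inj_pair2_eq_dec _ PeanoNat.Nat.eq_dec _ _ _ _ E2.
  have E4 := f_equal snd E3; simpl in E4.
  exact: Eqdep.EqdepTheory.inj_pair2 E4.
have taun : forall a b (f : Hom a b) z, tauf b (act X f z) = tauf a z.
  by move=> a b f z; rewrite /tauf (dmap_nat HM).
have [ht [[_ Hht] _]] := Hc.2.2 (Indisc CellK) tauf (fun d => @indisc_cont _ _ _) taun.
have inimg : forall d o, exists b, p d o = g d b.
  move=> d o.
  have [m [s [k' [a [Hs E]]]]] := decomp d (p d o).
  have T1 : tauf d (p d o) = tauf d0 z0 by rewrite -!Hht Hp.
  move: T1; rewrite /tauf E Ez0 !HM_cell //= => T1.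
  have Em := f_equal (@projT1 _ _) T1; simpl in Em; subst m.
  have T2 := Eqdep_dec.inj_pair2_eq_dec _ PeanoNat.Nat.eq_dec _ _ _ _ T1.
  case: T2 => Es Ek; subst s k'.
  by exists a.
pose beta d o := proj1_sig (cid (inimg d o)).
have betaP : forall d o, p d o = g d (beta d o).
  by move=> d o; rewrite /beta; case: cid.
have beta_cont : forall d, continuous (beta d).
  move=> d; apply/continuous_closedP => U CU.
  have CV := cell_closed d i k t Ht U CU.
  have CP := proj1 (continuous_closedP (p d)) (dmap_cont p d) _ CV.
  apply: closed_ext CP => o /=; split.
    move=> [u [Uu E]]; rewrite betaP in E.
    have := ginj _ _ _ E => ->; exact: Uu.
  by move=> Uo; exists (beta d o); split => //; rewrite betaP.
have beta_nat : forall a b (f : Hom a b) o, beta b (act O f o) = act (Ak i k) f (beta a o).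
  move=> a b f o; apply: (ginj b).
  by rewrite -betaP (dmap_nat p) betaP (dmap_nat g).
pose betaD := @Build_DMap D O (Ak i k) beta beta_cont beta_nat.
exists alpha, betaD; split.
  move=> d y; apply: (ginj d); have E := betaP d (alpha d y); rewrite Halpha in E; exact: (esym E).
move=> d y.
have [_ Hu] := Hfib O p Hp.
have := Hu (compD _ _ _ alpha betaD) (idD O).
move=> /(_ _ _ d y) H; apply: H.
  move=> d' y'; have E := betaP d' y'; exact: (etrans (Halpha d' (beta d' y')) (esym E)).
by [].
Qed.

End Main.

Theorem proposition6p4 (D : Cat) (F : DSpace D -> Prop)
  (HF : forall A, F A -> IsOrbit A)
  (X : DSpace D) (HX : HasDCW F X) :
  OfType F X.
Proof.
case: HX => Xs [js [ins [E0 [Hcol Hcell]]]].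
pose c1 := fun i => cid (Hcell i).
pose c2 := fun i => cid (proj2_sig (c1 i)).
pose c3 := fun i => cid (proj2_sig (c2 i)).
pose c4 := fun i => cid (proj2_sig (c3 i)).
pose c5 := fun i => cid (proj2 (proj2 (proj2_sig (c4 i)))).
pose c6 := fun i => cid (proj2_sig (c5 i)).
apply: (@main_of D F HF X Xs js ins E0 Hcol
  (fun i => proj1_sig (c1 i)) (fun i => proj1_sig (c2 i)) (fun i => proj1_sig (c3 i))
  (fun i => proj1_sig (c4 i))
  (fun i => proj1 (proj2_sig (c4 i))) (fun i => proj1 (proj2 (proj2_sig (c4 i))))
  (fun i => proj1_sig (c5 i)) (fun i => proj1_sig (c6 i)) (fun i => proj2_sig (c6 i))).
Qed.
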